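(* Let $G$ be a finite abelian group (written additively) and fix $\omega \in G$. Consider the Frobenius object in $\mathbf{Rel}$ with underlying set $X = G$, unit $\eta = \{0\}$, multiplication $\tilde{\mu}(x,y) = \{x+y\}$ for $x,y \in G$, and counit $\varepsilon = \{\omega\}$. Then for every integer $g \ge 0$ its partition function satisfies $$Z(\Sigma_g) = \begin{cases} T & \text{if } (g-1)\omega = 0,\\ F & \text{otherwise.}\end{cases}$$
   Context: $\mathbf{Rel}$ is the symmetric monoidal category whose objects are sets, whose morphisms $X \to Y$ are relations $R \subseteq X \times Y$, composed by $S\circ R = \{(x,z) : \exists y,\ (x,y)\in R,\ (y,z)\in S\}$, with identity the diagonal, monoidal product the Cartesian product, and unit the one-point set $\{\bullet\}$. A relation $R \subseteq X\times Y$ is identified with the map $\tilde R: X \to \mathcal{P}(Y)$, $\tilde R(x) = \{y : (x,y)\in R\}$. A Frobenius object in $\mathbf{Rel}$ is a set $X$ with a unit $\eta \subseteq X$ (a relation $\{\bullet\}\to X$), a counit $\varepsilon \subseteq X$ (a relation $X \to \{\bullet\}$), and a multiplication $\mu \subseteq X\times X\times X$ (a relation $X\times X \to X$, with map $\tilde\mu: X\times X\to\mathcal{P}(X)$) satisfying unitality $\mu\circ(\mathbf{1}\times\eta)=\mu\circ(\eta\times\mathbf{1})=\mathbf{1}$, associativity $\mu\circ(\mathbf{1}\times\mu)=\mu\circ(\mu\times\mathbf{1})$, and nondegeneracy: there is a relation $\beta:\{\bullet\}\to X\times X$ with $(\varepsilon\times\mathbf{1})\circ(\mu\times\mathbf{1})\circ(\mathbf{1}\times\beta)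 = (\mathbf{1}\times\varepsilon)\circ(\mathbf{1}\times\mu)\circ(\beta\times\mathbf{1}) = \mathbf{1}$ (such $\beta$ is unique). The comultiplication is $\delta = (\mathbf{1}\times\mu)\circ(\beta\times\mathbf{1}): X \to X\times X$. It is commutative if $\tilde\mu(x,y)=\tilde\mu(y,x)$ for all $x,y$. For a commutative Frobenius object, the partition function on the closed orientable surface $\Sigma_g$ of genus $g\ge 0$ is $Z(\Sigma_g) = \varepsilon\circ(\mu\circ\delta)^g\circ\eta \in \mathrm{Hom}_{\mathbf{Rel}}(\{\bullet\},\{\bullet\}) = \{\emptyset,\{\bullet\}\}$, where $\emptyset$ is identified with $F$ (false) and $\{\bullet\}$ with $T$ (true). *)

(* Defs.v *)
(* Relations in Rel are modelled as Prop-valued binary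
   predicates on types; a relation R : X -> Y corresponds to R x y <-> (x,y) in R. *)
From mathcomp Require Import all_boot all_algebra.
Set Implicit Arguments. Unset Strict Implicit. Unset Printing Implicit Defensive.

Definition Rrel (A B : Type) := A -> B -> Prop.

Definition rcomp A B C (S : Rrel B C) (R : Rrel A B) : Rrel A C :=
  fun a c => exists b, R a b /\ S b c.
Definition rid A : Rrel A A := fun a b => a = b.
Definition rtensor A B C D (R : Rrel A C) (S : Rrel B D) : Rrel (A * B) (C * D) :=
  fun p q => R p.1 q.1 /\ S p.2 q.2.
Definition req A B (R S : Rrel A B) : Prop := forall a b, R a b <-> S a b.

Definition lunit A : Rrel (unit * A) A := fun p a => p.2 = a.
Definition lunitinv A : Rrel A (unit * A) := fun a p => p.2 = a.
Definition runit A : Rrel (A * unit) A := fun p a => p.1 = a.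
Definition runitinv A : Rrel A (A * unit) := fun a p => p.1 = a.
Definition rassoc A B C : Rrel ((A * B) * C) (A * (B * C)) :=
  fun p q => q = (p.1.1, (p.1.2, p.2)).
Definition rassocinv A B C : Rrel (A * (B * C)) ((A * B) * C) :=
  fun p q => q = ((p.1, p.2.1), p.2.2).

Section Frob.
Variables (X : Type) (eta : Rrel unit X) (eps : Rrel X unit)
          (mu : Rrel (X * X) X) (beta : Rrel unit (X * X)).

(* (eps x 1) o (mu x 1) o (1 x beta) = 1, with the coherence isos made explicit *)
Definition nondeg_left : Prop :=
  req (rcomp (lunit (A:=X))
       (rcomp (rtensor eps (@rid X))
       (rcomp (rtensor mu (@rid X))
       (rcomp (rassocinv (A:=X) (B:=X) (C:=X))
       (rcomp (rtensor (@rid X) beta) (runitinv (A:=X)))))))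
      (@rid X).

(* (1 x eps) o (1 x mu) o (beta x 1) = 1 *)
Definition nondeg_right : Prop :=
  req (rcomp (runit (A:=X))
       (rcomp (rtensor (@rid X) eps)
       (rcomp (rtensor (@rid X) mu)
       (rcomp (rassoc (A:=X) (B:=X) (C:=X))
       (rcomp (rtensor beta (@rid X)) (lunitinv (A:=X)))))))
      (@rid X).

Definition frob_nondegenerate : Prop := nondeg_left /\ nondeg_right.

(* comultiplication delta = (1 x mu) o (beta x 1) : X -> X x X *)
Definition comult : Rrel X (X * X) :=
  rcomp (rtensor (@rid X) mu)
  (rcomp (rassoc (A:=X) (B:=X) (C:=X))
  (rcomp (rtensor beta (@rid X)) (lunitinv (A:=X)))).

Definition handle : Rrel X X := rcomp mu comult.

(* Z(Sigma_g) = eps o (mu o delta)^g o eta, an element of Hom({*},{*}),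
   identified with a Prop: True (T) iff (tt,tt) is in the relation. *)
Definition partition_fun (g : nat) : Prop :=
  rcomp eps (rcomp (iter g (rcomp handle) (@rid X)) eta) tt tt.
End Frob.

(* Main.v *)
Require Import Defs.
From mathcomp Require Import all_boot all_algebra.
Import GRing.Theory.
Local Open Scope ring_scope.

Theorem proposition4p1 (G : finZmodType) (omega : G)
  (beta : Rrel unit (G * G)%type)
  (hbeta : frob_nondegenerate (fun (x : G) (_ : unit) => x = omega)
             (fun (p : (G * G)%type) (z : G) => z = p.1 + p.2) beta)
  (g : nat) :
  partition_fun (fun (_ : unit) (x : G) => x = 0) (fun (x : G) (_ : unit) => x = omega)
    (fun (p : (G * G)%type) (z : G) => z = p.1 + p.2) beta g
  <-> omega *~ (g%:Z - 1) = 0.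
Proof.
have hb : forall a y, beta tt (a, y) <-> a = omega - y.
  case: hbeta => hl _ a y; split.
  - move=> hay.
    have H : omega - a = y.
      apply: (proj1 (hl (omega - a) y)).
      exists (tt, y); split; last by [].
      exists ((omega - a) + a, y); split; last by split => //=; rewrite subrK.
      exists ((omega - a, a), y); split; last by [].
      exists (omega - a, (a, y)); split; last by [].
      exists (omega - a, tt); split; first by [].
      by split; case: (tt).
    by rewrite -H opprB addrC subrK.
  - move=> ->.
    have := (proj2 (hl y y) erefl).
    move=> [[u v] [H1 /= ev]].
    move: H1 => [[w v'] [H2 [/= hw ev']]].
    move: H2 => [[[p q] r] [H3 [/= e4 /= er]]].
    move: H3 => [[p' [q' r']] [H4 /= e]].
    case: e => ep eq er'.
    move: H4 => [[x1 u1] [/= e1 [/= e2 hb1]]].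
    move: hb1 e1; case: u1 => hb1 e1.
    rewrite /lunit /rid /runitinv /= in ev ev' er e2 e1; subst.
    by rewrite [y + _]addrC addrK.
have hh : forall x z, handle (fun p z => z = p.1 + p.2) beta x z <-> z = x + omega.
  move=> x z; split.
  - move=> [[p q] [H1 /= ->]].
    move: H1 => [[a [b c]] [H2 [/= e1 e2]]].
    move: H2 => [[[a' b'] c'] [H3 /= e3]].
    move: H3 => [[u x'] [/= e4 [/= hb1 e5]]].
    case: e3 => ea eb ec.
    move: hb1; case: u e4 => e4 hb1.
    rewrite /rid /lunitinv /= in e1 e2 e4 e5; subst.
    move/hb: hb1 => ->.
    by rewrite addrA subrK addrC.
  - move=> ->. exists (omega - 0, 0 + x); split; last by rewrite /= subr0 add0r addrC.
    exists (omega - 0, (0, x)); split; last by split.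
    exists ((omega - 0, 0), x); split; last by [].
    exists (tt, x); split; first by [].
    by split => //=; apply/hb.
have hi : forall n x z, iter n (rcomp (handle (fun p z => z = p.1 + p.2) beta)) (@rid G) x z <-> z = x + omega *+ n.
  elim=> [|n IH] x z /=; first by rewrite mulr0n addr0; split => ->.
  split => [[b [/IH -> /hh ->]]|->].
  - by rewrite mulrSr addrA.
  - exists (x + omega *+ n); split; first by apply/IH.
    by apply/hh; rewrite mulrSr addrA.
rewrite /partition_fun; split.
- move=> [b [[c [ec hc]] hb']].
  rewrite /= in ec hb'; subst c.
  move/hi: hc; rewrite add0r => e.
  by rewrite mulrzBr -pmulrn -e hb' mulr1z subrr.
- move=> h; exists omega; split => //; exists 0; split => //; apply/hi.
  by apply/eqP; rewrite add0r eq_sym -subr_eq0 pmulrn -{2}(mulr1z omega) -mulrzBr h.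
Qed.
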